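(* There exist $0\le a<c$ and $\Delta q>0$ such that, when $1/b$ is uniformly distributed on $[a,c]$, $$\frac{\mathbb E(1/b)}{M'_{1/b}(-\Delta q)}<M_{1/b}(\Delta q),$$ i.e. the R$^2$DP Laplace mechanism with uniformly distributed $1/b$ can satisfy the necessary condition for improving on the Laplace mechanism.
   Context: $M_{1/b}(t)=\mathbb E[e^{t/b}]$ is the moment generating function of $1/b$ and $M'_{1/b}$ its derivative; for the uniform distribution on $[a,c]$, $M(t)=\frac{e^{tc}-e^{ta}}{t(c-a)}$ for $t\neq0$ and $M(0)=1$. The R$^2$DP Laplace mechanism adds $\mathrm{Lap}(b)$ noise (density $\frac1{2b}e^{-|x|/b}$) with random scale $b$ to a query of sensitivity $\Delta q$. *)

(* Defs.v *)
From Stdlib Require Import Reals.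
From Coquelicot Require Import Coquelicot.
Open Scope R_scope.

Definition unif_density (a c x : R) : R :=
  if Rle_dec a x then (if Rle_dec x c then / (c - a) else 0) else 0.

(* E[1/b] when 1/b ~ Uniform[a,c]: integral of x times the density over [a,c]. *)
Definition unif_mean (a c : R) : R :=
  RInt (fun x => x * unif_density a c x) a c.

(* Moment generating function M_{1/b}(t) = E[e^{t/b}] for 1/b ~ Uniform[a,c]. *)
Definition unif_mgf (a c t : R) : R :=
  RInt (fun x => exp (t * x) * unif_density a c x) a c.

(* Main.v *)
Require Import Defs.
From Stdlib Require Import Reals Lra Lia.
From Coquelicot Require Import Coquelicot.
Open Scope R_scope.

Lemma dens01 x : 0 <= x <= 1 -> unif_density 0 1 x = 1.
Proof. intros [h1 h2]. unfold unif_density.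
destruct (Rle_dec 0 x); [|lra]. destruct (Rle_dec x 1); [|lra]. field. Qed.

Lemma mean01 : unif_mean 0 1 = 1/2.
Proof.
unfold unif_mean.
rewrite (RInt_ext _ (fun x => x)).
2:{ intros x Hx. rewrite Rmin_left in Hx by lra. rewrite Rmax_right in Hx by lra.
  rewrite dens01 by lra. apply Rmult_1_r. }
apply is_RInt_unique.
replace (1/2) with ((fun x => x*x/2) 1 - (fun x => x*x/2) 0) by (simpl; field).
apply (is_RInt_derive (fun x => x*x/2)).
- intros x _. auto_derive; auto. field.
- intros x _. apply continuous_id.
Qed.

Definition G t := (exp t - 1) / t.

Lemma mgf01 t : t <> 0 -> unif_mgf 0 1 t = G t.
Proof.
intros Ht. unfold unif_mgf, G.
rewrite (RInt_ext _ (fun x => exp (t*x))).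
2:{ intros x Hx. rewrite Rmin_left in Hx by lra. rewrite Rmax_right in Hx by lra.
  rewrite dens01 by lra. apply Rmult_1_r. }
apply is_RInt_unique.
replace ((exp t - 1)/t) with ((fun x => exp (t*x)/t) 1 - (fun x => exp (t*x)/t) 0)
  by (simpl; rewrite Rmult_0_r, Rmult_1_r, exp_0; field; auto).
apply (is_RInt_derive (fun x => exp (t*x)/t)).
- intros x _. auto_derive; auto. field; auto.
- intros x _. apply (ex_derive_continuous (fun x => exp (t*x))). auto_derive. auto.
Qed.

Lemma derG : Derive (unif_mgf 0 1) (Ropp 10) = (1 - 11 * exp (Ropp 10)) / 100.
Proof.
rewrite (Derive_ext_loc _ G).
2:{ exists (mkposreal 1 Rlt_0_1). intros y Hy. apply mgf01.
  unfold ball in Hy; simpl in Hy; unfold AbsRing_ball, abs, minus, plus, opp in Hy; simpl in Hy.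
  apply Rabs_def2 in Hy. lra. }
apply is_derive_unique. unfold G. auto_derive.
- lra.
- field.
Qed.

Theorem lemmaB2 :
  exists a c dq : R, 0 <= a /\ a < c /\ 0 < dq /\
    unif_mean a c / Derive (unif_mgf a c) (- dq) < unif_mgf a c dq.
Proof.
exists 0, 1, 10. split; [lra|]. split; [lra|]. split; [lra|].
rewrite mean01, derG, mgf01 by lra. unfold G.
assert (He1 : 2 < exp 1) by (pose proof (exp_ineq1 1 ltac:(lra)); lra).
assert (HE : exp 10 = exp 1 ^ 10).
{ assert (K : forall n, exp (INR n) = exp 1 ^ n).
  { induction n as [|n IH]. simpl. apply exp_0.
    rewrite S_INR, exp_plus, IH. simpl. apply Rmult_comm. }
  rewrite <- K. f_equal. simpl. lra. }
assert (Hb : 1024 <= exp 10).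
{ rewrite HE. replace 1024 with (2^10) by (simpl; ring).
  assert (K : forall n, 2 ^ n <= exp 1 ^ n).
  { induction n as [|n IH]. simpl; lra. simpl.
    apply Rmult_le_compat; try lra. apply pow_le; lra. }
  apply K. }
assert (Hm : exp (Ropp 10) = / exp 10) by apply exp_Ropp.
rewrite Hm.
set (E := exp 10) in *.
assert (HE0 : 0 < E) by lra.
apply (Rmult_lt_reg_r (E * 10)); [nra|].
unfold Rdiv. field_simplify; try lra.
apply (Rmult_lt_reg_r (2*E - 22)); [lra|].
unfold Rdiv. rewrite Rmult_assoc, Rinv_l, Rmult_1_r by lra.
nra.
Qed.
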